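(* Let $2\le k\le d$ and let $P\subset\mathbb{R}^d$ be a finite point set with properties $a_1,\dots,a_k\colon P\to\{-1,1\}$, each strictly linearly separable on $P$, such that all $2^k$ possible labels occur in $P$. For $i=2,\dots,k$ let $H_i$ be a hyperplane strictly separating $P^i_-$ from $P^i_+$, with normal vector $v_i$. Assume general position in the following sense: $v_2,\dots,v_k$ are linearly independent; any at most $d+1$ points of $P$ are affinely independent; and, writing $T$ for the orthogonal projection of $\mathbb{R}^d$ onto $A=\mathrm{span}(v_2,\dots,v_k)$, the images under $T$ of any at most $k$ points of $P$ are affinely independent. Then there is a unit vector $w$ with $w\cdot v_i=0$ for all $i=2,\dots,k$ (a separation preserving projection) such that, after projecting along $w$, the sets $P'_-$ and $P'_+$ are not strictly linearly separable.
   Context: For a finite $P\subset\mathbb{R}^d$ with properties $a_i\colon P\to\{-1,1\}$, write $P^i_{\pm}=\{p\in P: a_i(p)=\pm1\}$ and $P_\pm=P^1_\pm$. The label of $p$ is $(a_1(p),\dots,a_k(p))$. Projection along a unit vector $w$: $p'=p-(p\cdot w)w\in w^\perp$; $X'$ is the image of $X$. Two finite sets $X,Y$ in a linear subspace $L$ are strictly linearly separable (in $L$) if there exist a unit $v\in L$ and $c$ with $v\cdot x<c<v\cdot y$ for all $x\in X,y\in Y$; for projected sets $L=w^\perp$. A property $a_i$ is strictly linearly separable on $P$ if $P^i_-$ and $P^i_+$ are. A projection along $w$ is called separation preserving (with respect to the fixed hyperplanes $H_2,\dots,H_k$) if $w$ is orthogonal to all normals $v_2,\dots,v_k$. *)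

(* Defs.v *)
From mathcomp Require Import all_boot all_order all_algebra.
From mathcomp Require Import reals.
Set Implicit Arguments. Unset Strict Implicit. Unset Printing Implicit Defensive.
Import Order.TTheory GRing.Theory Num.Theory.
Local Open Scope ring_scope.

Section Defs.
Variables (R : realType) (d : nat).
Notation pt := 'rV[R]_d.

Definition dot (u v : pt) : R := \sum_(j < d) u 0 j * v 0 j.

Definition proj_along (w p : pt) : pt := p - (dot p w) *: w.

Definition strictly_lin_sep_in (L : pt -> Prop) (X Y : seq pt) : Prop :=
  exists (v : pt) (c : R), L v /\ dot v v = 1 /\
    (forall x, x \in X -> dot v x < c) /\ (forall y, y \in Y -> c < dot v y).

(* the sets P^i_- and P^i_+ (label false = -1, true = +1) *)
Definition Pminus (a : pt -> bool) (P : seq pt) : seq pt := [seq p <- P | ~~ a p].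
Definition Pplus  (a : pt -> bool) (P : seq pt) : seq pt := [seq p <- P | a p].

Definition hyperplane_strictly_separates (v : pt) (c : R) (X Y : seq pt) : Prop :=
  ((forall x, x \in X -> dot v x < c) /\ (forall y, y \in Y -> c < dot v y)) \/
  ((forall x, x \in X -> c < dot v x) /\ (forall y, y \in Y -> dot v y < c)).

(* affine independence of a finite list of points (this forces the points to be distinct) *)
Definition affinely_independent (s : seq pt) : Prop :=
  forall lam : nat -> R,
    \sum_(j < size s) lam j = 0 ->
    \sum_(j < size s) lam j *: s`_j = 0 ->
    forall j, (j < size s)%N -> lam j = 0.

Definition lin_indep_2k (k : nat) (v : nat -> pt) : Prop :=
  forall lam : nat -> R,
    \sum_(2 <= i < k.+1) lam i *: v i = 0 ->
    forall i, (2 <= i <= k)%N -> lam i = 0.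

Definition in_span_2k (k : nat) (v : nat -> pt) (x : pt) : Prop :=
  exists lam : nat -> R, x = \sum_(2 <= i < k.+1) lam i *: v i.

Definition is_orth_proj_onto_span (k : nat) (v : nat -> pt) (T : pt -> pt) : Prop :=
  forall x, in_span_2k k v (T x) /\
            (forall y, in_span_2k k v y -> dot (x - T x) y = 0).

End Defs.

(* Main.v *)
Require Import Defs.
From mathcomp Require Import all_boot all_order all_algebra.
From mathcomp Require Import reals.
From mathcomp Require Import ring lra zify.
From Stdlib Require Import ClassicalEpsilon.
Import Order.TTheory GRing.Theory Num.Theory.
Local Open Scope ring_scope.

Set Implicit Arguments. Unset Strict Implicit.
Section Helpers.
Variables (R : realType) (d : nat).
Notation pt := 'rV[R]_d.

Lemma dot_mix (u x y : pt) (s t : R) :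
  dot u (s *: x + t *: y) = s * dot u x + t * dot u y.
Proof.
rewrite /dot !mulr_sumr -big_split; apply: eq_bigr => j _; rewrite !mxE /=; ring.
Qed.

Lemma dotC (u x : pt) : dot u x = dot x u.
Proof. by rewrite /dot; apply: eq_bigr => j _; rewrite mulrC. Qed.

Lemma dotBr (u x y : pt) : dot u (x - y) = dot u x - dot u y.
Proof.
rewrite /dot -sumrB; apply: eq_bigr => j _; rewrite !mxE /=; ring.
Qed.

Lemma dotZr (u x : pt) (s : R) : dot u (s *: x) = s * dot u x.
Proof.
rewrite /dot mulr_sumr; apply: eq_bigr => j _; rewrite !mxE /=; ring.
Qed.

Lemma dot_eq0 (z : pt) : dot z z = 0 -> z = 0.
Proof.
move=> H; apply/rowP => j.
have H0 : forall i : 'I_d, true -> 0 <= z 0 i * z 0 i.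
  by move=> i _; rewrite -expr2 sqr_ge0.
have := @psumr_eq0P _ _ xpredT (fun j => z 0 j * z 0 j) H0 H j isT.
by move=> /eqP; rewrite mulf_eq0 orbb mxE => /eqP.
Qed.

Lemma dot_ge0 (z : pt) : 0 <= dot z z.
Proof. by apply: sumr_ge0 => i _; rewrite -expr2 sqr_ge0. Qed.

Lemma mix_pos (a b t : R) : 0 < a -> 0 < b -> 0 <= t -> t <= 1 ->
  0 < (1 - t) * a + t * b.
Proof.
move=> a0 b0 t0 t1; case: (ltrP t 1) => ht.
  have h1 : 0 < (1 - t) * a by apply: mulr_gt0; lra.
  have h2 : 0 <= t * b by apply: mulr_ge0; lra.
  lra.
have h1 : 0 <= (1 - t) * a by apply: mulr_ge0; lra.
have h2 : 0 < t * b by apply: mulr_gt0; lra.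
lra.
Qed.

Inductive hull (Q : pt -> Prop) : pt -> Prop :=
| hull_pt x : Q x -> hull Q x
| hull_mix x y t : hull Q x -> hull Q y -> 0 <= t -> t <= 1 ->
    hull Q ((1 - t) *: x + t *: y).

Lemma hull_sub (Q S : pt -> Prop) :
  (forall x, Q x -> S x) ->
  (forall x y t, S x -> S y -> 0 <= t -> t <= 1 -> S ((1 - t) *: x + t *: y)) ->
  forall x, hull Q x -> S x.
Proof.
move=> HQ HS x; elim=> [z Qz|x1 y1 t _ IH1 _ IH2 t0 t1]; first exact: HQ.
exact: HS.
Qed.

Lemma hull_mono (Q Q' : pt -> Prop) :
  (forall x, Q x -> Q' x) -> forall x, hull Q x -> hull Q' x.
Proof.
move=> H; apply: hull_sub => [x Qx|x y t hx hy t0 t1].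
  by apply: hull_pt; apply: H.
exact: hull_mix.
Qed.

Lemma hull_lt (Q : pt -> Prop) (u : pt) (c : R) :
  (forall x, Q x -> dot u x < c) -> forall x, hull Q x -> dot u x < c.
Proof.
move=> H; apply: hull_sub => // x y t hx hy t0 t1; rewrite dot_mix.
have := mix_pos (a := c - dot u x) (b := c - dot u y) (t := t).
lra.
Qed.

Lemma hull_gt (Q : pt -> Prop) (u : pt) (c : R) :
  (forall x, Q x -> c < dot u x) -> forall x, hull Q x -> c < dot u x.
Proof.
move=> H; apply: hull_sub => // x y t hx hy t0 t1; rewrite dot_mix.
have := mix_pos (a := dot u x - c) (b := dot u y - c) (t := t).
lra.
Qed.

Lemma key (f : nat -> pt -> R)
  (faff : forall i x y t, f i ((1 - t) *: x + t *: y) = (1 - t) * f i x + t * f i y) :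
  forall n (Q : pt -> Prop),
  (forall lab : nat -> bool, exists p, Q p /\
     forall i, (i < n)%N -> if lab i then 0 < f i p else f i p < 0) ->
  exists x, hull Q x /\ forall i, (i < n)%N -> f i x = 0.
Proof.
elim=> [|n IH] Q H.
  have [p [Qp _]] := H (fun _ => true).
  by exists p; split; [apply: hull_pt|].
case: (IH (fun p => Q p /\ 0 < f n p)) => [lab|xp [hxp fxp]].
  have [p [Qp Hp]] := H (fun i => if i == n then true else lab i).
  exists p; split; first by split=> //; have := Hp n (ltnSn n); rewrite eqxx.
  by move=> i lti; have := Hp i (leqW lti); rewrite (ltn_eqF lti).
case: (IH (fun p => Q p /\ f n p < 0)) => [lab|xm [hxm fxm]].
  have [p [Qp Hp]] := H (fun i => if i == n then false else lab i).
  exists p; split; first by split=> //; have := Hp n (ltnSn n); rewrite eqxx.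
  by move=> i lti; have := Hp i (leqW lti); rewrite (ltn_eqF lti).
have pa : 0 < f n xp.
  move: xp hxp {fxp}; apply: hull_sub => [x [] //|x y t hx hy t0 t1].
  rewrite faff; have := mix_pos (a := f n x) (b := f n y) (t := t); lra.
have nb : f n xm < 0.
  move: xm hxm {fxm}; apply: hull_sub => [x [] //|x y t hx hy t0 t1].
  rewrite faff; have := mix_pos (a := - f n x) (b := - f n y) (t := t); lra.
set A := f n xp in pa; set B := f n xm in nb.
have ABpos : 0 < A - B by lra.
exists ((1 - A / (A - B)) *: xp + (A / (A - B)) *: xm); split.
  apply: hull_mix.
  - by apply: hull_mono hxp => x [].
  - by apply: hull_mono hxm => x [].
  - by apply: divr_ge0; lra.
  - by rewrite ler_pdivrMr //; lra.
move=> i; rewrite ltnS leq_eqVlt => /orP[/eqP->|lti].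
  rewrite faff -/A -/B; field; lra.
by rewrite faff fxp // fxm //; ring.
Qed.

End Helpers.

Theorem mainTheorem3 (R : realType) (d k : nat)
  (P : seq 'rV[R]_d) (a : nat -> 'rV[R]_d -> bool)
  (v : nat -> 'rV[R]_d) (c : nat -> R) :
  (2 <= k <= d)%N ->
  uniq P ->
  (* each property a_i (1 <= i <= k) is strictly linearly separable on P *)
  (forall i, (1 <= i <= k)%N ->
     strictly_lin_sep_in (fun _ => True) (Pminus (a i) P) (Pplus (a i) P)) ->
  (* all 2^k labels occur in P *)
  (forall lab : nat -> bool, exists2 p, p \in P &
     forall i, (1 <= i <= k)%N -> a i p = lab i) ->
  (* H_i = {x | v_i . x = c_i} strictly separates P^i_- from P^i_+, i = 2..k *)
  (forall i, (2 <= i <= k)%N ->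
     hyperplane_strictly_separates (v i) (c i) (Pminus (a i) P) (Pplus (a i) P)) ->
  (* general position *)
  lin_indep_2k k v ->
  (forall s : seq 'rV[R]_d, uniq s -> {subset s <= P} -> (size s <= d.+1)%N ->
     affinely_independent s) ->
  (forall T : 'rV[R]_d -> 'rV[R]_d, is_orth_proj_onto_span k v T ->
     forall s : seq 'rV[R]_d, uniq s -> {subset s <= P} -> (size s <= k)%N ->
       affinely_independent (map T s)) ->
  exists w : 'rV[R]_d,
    dot w w = 1 /\
    (forall i, (2 <= i <= k)%N -> dot w (v i) = 0) /\
    ~ strictly_lin_sep_in (fun u => dot u w = 0)
        (map (proj_along w) (Pminus (a 1%N) P))
        (map (proj_along w) (Pplus (a 1%N) P)).
Proof.
move=> /andP[k2 kd] _ Hsep Hlab Hhyp _ _ _.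
have [q qP qa] := Hlab (fun _ => false).
pose ori (i : nat) : bool :=
  if excluded_middle_informative
       (forall x, x \in Pminus (a i) P -> dot (v i) x < c i) then true else false.
pose g (j : nat) (p : 'rV[R]_d) : R :=
  if ori j.+2 then dot (v j.+2) p - c j.+2 else c j.+2 - dot (v j.+2) p.
have Hg : forall j p, (j < k - 1)%N -> p \in P ->
    if a j.+2 p then 0 < g j p else g j p < 0.
  move=> j p lt pP; have hi : (2 <= j.+2 <= k)%N by lia.
  have qm : q \in Pminus (a j.+2) P by rewrite mem_filter qP qa //=; lia.
  rewrite /g /ori; case: excluded_middle_informative => H1 /=;
    case: (Hhyp _ hi) => [[Hm Hp]|[Hm Hp]].
  - case ap: (a j.+2 p).
      by have := Hp p; rewrite mem_filter ap pP => /(_ isT); lra.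
    by have := Hm p; rewrite mem_filter ap pP => /(_ isT); lra.
  - by have := H1 q qm; have := Hm q qm; lra.
  - by exfalso; apply: H1.
  - case ap: (a j.+2 p).
      by have := Hp p; rewrite mem_filter ap pP => /(_ isT); lra.
    by have := Hm p; rewrite mem_filter ap pP => /(_ isT); lra.
have gaff : forall i x y t, g i ((1 - t) *: x + t *: y) = (1 - t) * g i x + t * g i y.
  by move=> i x y t; rewrite /g; case: ifP => _; rewrite dot_mix; ring.
have Hall : forall b : bool, exists x, hull (fun p => p \in [seq p <- P | a 1%N p == b]) x
    /\ forall i, (2 <= i <= k)%N -> dot (v i) x = c i.
  move=> b.
  case: (key gaff (n := (k - 1)%N)
     (Q := fun p => p \in [seq p <- P | a 1%N p == b])) => [lab|x [hx fx]].
    have [p pP Hp] := Hlab (fun i => if i == 1%N then b else lab (i - 2)%N).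
    exists p; split; first by rewrite mem_filter pP Hp //=; lia.
    move=> j lt; have := Hg j p lt pP; rewrite Hp /=; last by lia.
    by have -> : (j.+2 - 2 = j)%N by lia.
  exists x; split=> // i hi.
  have := fx (i - 2)%N ltac:(lia); rewrite /g.
  have -> : ((i - 2).+2 = i)%N by lia.
  by case: ifP => _; lra.
have [xm [hxm exm]] := Hall false.
have [xp [hxp exp]] := Hall true.
have hm : forall x, hull (fun p => p \in Pminus (a 1%N) P) x ->
           hull (fun p => p \in [seq p <- P | a 1%N p == false]) x.
  apply: hull_mono => x; rewrite !mem_filter; by case: (a 1%N x).
have hm' : forall x, hull (fun p => p \in [seq p <- P | a 1%N p == false]) x ->
           hull (fun p => p \in Pminus (a 1%N) P) x.
  apply: hull_mono => x; rewrite !mem_filter; by case: (a 1%N x).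
have hp' : forall x, hull (fun p => p \in [seq p <- P | a 1%N p == true]) x ->
           hull (fun p => p \in Pplus (a 1%N) P) x.
  apply: hull_mono => x; rewrite !mem_filter; by case: (a 1%N x).
have {}hxm := hm' _ hxm; have {}hxp := hp' _ hxp.
have [u [c0 [_ [_ [Hum Hup]]]]] := Hsep 1%N ltac:(lia).
have um := hull_lt Hum hxm; have up := hull_gt Hup hxp.
set z := xp - xm.
have zz : 0 < dot z z.
  rewrite lt_def dot_ge0 andbT; apply/eqP => /dot_eq0 z0.
  have : dot u z = 0 by rewrite z0 /dot big1 // => j _; rewrite mxE mulr0.
  rewrite /z dotBr; lra.
set s := Num.sqrt (dot z z).
have s0 : 0 < s by rewrite sqrtr_gt0.
have s2 : s ^+ 2 = dot z z by rewrite sqr_sqrtr // ltW.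
exists (s^-1 *: z); split; [|split].
- rewrite dotZr dotC dotZr -s2; field; lra.
- move=> i hi; rewrite dotC dotZr /z dotBr exp // exm //; ring.
- move=> [u' [c' [hw [_ [Hm Hp]]]]].
  have hproj : forall p, dot u' (proj_along (s^-1 *: z) p) = dot u' p.
    by move=> p; rewrite /proj_along dotBr dotZr hw mulr0 subr0.
  have m' : dot u' xm < c'.
    apply: (hull_lt _ hxm) => p pin; rewrite -hproj; apply: Hm; exact: map_f.
  have p' : c' < dot u' xp.
    apply: (hull_gt _ hxp) => p pin; rewrite -hproj; apply: Hp; exact: map_f.
  move: hw; rewrite dotZr /z dotBr => hw.
  have si : 0 < s^-1 by rewrite invr_gt0.
  nra.
Qed.
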